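(* Let $W$ be a finite-dimensional complex vector space and let $\mathcal{B}$ be a finite set of linear subspaces of $W$, equipped with a linear order. Suppose $\mathcal{B}$ contains two distinct subspaces $u,v$ with $u\subset v$, and let $\mathcal{B}'=\mathcal{B}\setminus\{u\}$ with the induced linear order. Then the natural inclusion $D(\mathcal{B}')\hookrightarrow D(\mathcal{B})$ is a quasi-isomorphism of cochain complexes (it induces an isomorphism on cohomology).
   Context: For a finite set $\mathcal{C}$ of linear subspaces of a complex vector space $W$, equipped with a linear order, $D(\mathcal{C})$ denotes the following cochain complex over $\mathbb{Q}$. As a vector space it has basis all subsets $\sigma\subseteq\mathcal{C}$. Write $\vee\sigma=\bigcap_{x\in\sigma}x$ (with $\vee\emptyset=W$). The degree of $\sigma$ is $\deg\sigma=2\operatorname{codim}_W(\vee\sigma)-|\sigma|$. For $\sigma=\{x_{i_1},\dots,x_{i_r}\}$ listed in increasing order for the given linear order, the differential is $$d\sigma=\sum_{j\,:\,\vee(\sigma\setminus\{x_{i_j}\})=\vee\sigma}(-1)^j\,(\sigma\setminus\{x_{i_j}\}).$$ Here $\mathcal{C}$ need not satisfy any non-inclusion condition. For $\mathcal{C}'\subseteq\mathcal{C}$ with the induced order, $D(\mathcal{C}')$ is the subcomplex of $D(\mathcal{C})$ spanned by subsets of $\mathcal{C}'$. *)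

(* Defs.v *)
From HB Require Import structures.
From mathcomp Require Import all_boot all_algebra.
From mathcomp Require Import reals complex.
Set Implicit Arguments. Unset Strict Implicit. Unset Printing Implicit Defensive.
Import GRing.Theory Num.Theory.
Local Open Scope ring_scope.

(* A finite linearly ordered family C of subspaces of W is encoded as an
   (injective) map  C : 'I_n -> {vspace W};  the linear order is the order
   of the indices. *)

Section DComplex.
Variables (K : fieldType) (W : vectType K) (n : nat) (C : 'I_n -> {vspace W}).

Definition vee (s : {set 'I_n}) : {vspace W} := (\bigcap_(x in s) C x)%VS.

Definition codimW (s : {set 'I_n}) : nat := (\dim (fullv : {vspace W}) - \dim (vee s))%N.

Definition degD (s : {set 'I_n}) : int := (2 * codimW s)%:Z - #|s|%:Z.

(* 1-based position of x in sigma listed in increasing order *)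
Definition posn (s : {set 'I_n}) (x : 'I_n) : nat := #|[set y in s | (y <= x)%N]|.

(* coefficient of the basis element tau in d(sigma) *)
Definition dcoef (s t : {set 'I_n}) : rat :=
  \sum_(x in s | (t == s :\ x) && (vee (s :\ x) == vee s)) (-1) ^+ posn s x.

(* Elements of D(C): rational linear combinations of subsets of C,
   encoded by their coefficient functions. *)
Definition cochain := {ffun {set 'I_n} -> rat}.

Definition dD (f : cochain) : cochain :=
  [ffun t => \sum_(s : {set 'I_n}) f s * dcoef s t].

Definition homog (k : int) (f : cochain) : Prop :=
  forall s : {set 'I_n}, f s != 0 -> degD s = k.

(* f lies in the subcomplex D(C \ {C i}) spanned by subsets avoiding i *)
Definition avoids (i : 'I_n) (f : cochain) : Prop :=
  forall s : {set 'I_n}, i \in s -> f s = 0.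

(* The inclusion D(C \ {C i}) -> D(C) induces an isomorphism on cohomology
   in every degree k: the induced map H^k(D(C')) -> H^k(D(C)) is
   surjective (every k-cocycle of D(C) is cohomologous to a cocycle of D(C'))
   and injective (a k-cocycle of D(C') that is a coboundary in D(C) is a
   coboundary in D(C')). *)
Definition incl_quasi_iso (i : 'I_n) : Prop :=
  forall k : int,
    (forall z, homog k z -> dD z = 0 ->
       exists z' y, [/\ homog k z', avoids i z', dD z' = 0, homog (k - 1) y
                     & z = z' + dD y])
    /\
    (forall z, homog k z -> avoids i z -> dD z = 0 ->
       (exists y, homog (k - 1) y /\ z = dD y) ->
       exists y, [/\ homog (k - 1) y, avoids i y & z = dD y]).

End DComplex.

(* Main.v *)
Require Import Defs.
From HB Require Import structures.
From mathcomp Require Import all_boot all_algebra.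
From mathcomp Require Import reals complex zify ring.
Set Implicit Arguments. Unset Strict Implicit. Unset Printing Implicit Defensive.
Import GRing.Theory Num.Theory.
Local Open Scope ring_scope.

Section Aux.
Variables (K : fieldType) (W : vectType K) (n : nat) (C : 'I_n -> {vspace W}).
Implicit Types (x y : 'I_n) (t : {set 'I_n}).

Lemma vee_U1 x t : vee C (x |: t) = (C x :&: vee C t)%VS.
Proof.
rewrite /vee; case: (boolP (x \in t)) => xt.
  rewrite (setUidPr _); last by rewrite sub1set.
  apply/esym/capv_idPr; exact: bigcapv_inf xt _.
by rewrite big_setU1.
Qed.

Lemma vee_cond x t : (vee C t == vee C (x |: t)) = (vee C t <= C x)%VS.
Proof.
rewrite vee_U1; apply/eqP/idP => [->|h]; first exact: capvSl.
by apply/esym/capv_idPr.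
Qed.

Lemma vee_le x t : x \in t -> (vee C t <= C x)%VS.
Proof. by move=> xt; apply: bigcapv_inf xt _. Qed.

Lemma posnU1 y t x : y \notin t -> posn (y |: t) x = (posn t x + (y <= x)%N)%N.
Proof.
move=> yt; rewrite /posn.
case: (boolP (y <= x)%N) => hyx.
  have -> : [set z in y |: t | (z <= x)%N] = y |: [set z in t | (z <= x)%N].
    apply/setP=> z; rewrite !inE; case: (eqVneq z y) => [->|] //=.
  by rewrite cardsU1 inE (negbTE yt) addnC.
have -> : [set z in y |: t | (z <= x)%N] = [set z in t | (z <= x)%N].
  apply/setP=> z; rewrite !inE; case: (eqVneq z y) => [->|] //=.
  by rewrite (negbTE yt) (negbTE hyx).
by rewrite addn0.
Qed.
Definition sg t x : rat := (-1) ^+ posn t x.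

Lemma dDE (f : cochain n) t : dD C f t =
  \sum_(x | (x \notin t) && (vee C t <= C x)%VS) sg (x |: t) x * f (x |: t).
Proof.
rewrite ffunE /dcoef.
under eq_bigr => s _ do rewrite big_distrr /=.
rewrite (exchange_big_dep xpredT) //=.
rewrite [RHS]big_mkcond; apply: eq_bigr => x _.
idtac.
case: (boolP (x \in t)) => xt /=.
  apply: big1 => s /and3P [xs /eqP ts _].
  by move: xt; rewrite ts !inE eqxx.
have key : forall s : {set 'I_n}, [&& x \in s, t == s :\ x & vee C (s :\ x) == vee C s] =
   (vee C t <= C x)%VS && (s == x |: t).
  move=> s; apply/idP/idP.
    case/and3P=> xs /eqP ts hv.
    by rewrite ts setD1K // eqxx andbT -vee_cond setD1K.
  case/andP=> h /eqP ->; rewrite setU1K // !inE eqxx /= eqxx /=.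
  by rewrite vee_cond.
under eq_bigl => s do rewrite key.
case: ifP => h /=.
  by rewrite (big_pred1 (x |: t)) // /sg mulrC.
by rewrite big_pred0.
Qed.

Lemma sgU1 y t x : y \notin t -> sg (y |: t) x = (-1) ^+ (y <= x)%N * sg t x.
Proof. by move=> yt; rewrite /sg posnU1 // exprD mulrC. Qed.

Lemma sgU1_self x t : x \notin t -> sg (x |: t) x = - sg t x.
Proof. by move=> xt; rewrite sgU1 // leqnn expr1 mulN1r. Qed.

Lemma leq_flip x y : x != y -> ((x <= y)%N + (y <= x)%N = 1)%N.
Proof.
move=> hxy; have : (nat_of_ord x != nat_of_ord y) by [].
by case: (ltngtP x y).
Qed.

Lemma sign_flip (a b : nat) : (a + b = 1)%N -> (-1) ^+ a = - (-1) ^+ b :> rat.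
Proof. by case: a => [|[|a]]; case: b => [|[|b]] //= _; rewrite ?expr0 ?expr1 ?opprK. Qed.

Lemma dD_dD (f : cochain n) t : dD C (dD C f) t = 0.
Proof.
rewrite dDE.
pose F x y := if [&& x \notin t, y \notin t, x != y, (vee C t <= C x)%VS & (vee C t <= C y)%VS]
  then sg (x |: t) x * (sg (y |: (x |: t)) y * f (y |: (x |: t))) else 0.
have -> : \sum_(x | (x \notin t) && (vee C t <= C x)%VS) sg (x |: t) x * dD C f (x |: t)
    = \sum_x \sum_y F x y.
  rewrite big_mkcond; apply: eq_bigr => x _; case: ifP => hx.
    case/andP: hx => xt hx.
    rewrite dDE big_distrr big_mkcond; apply: eq_bigr => y _ /=.
    have -> : vee C (x |: t) = vee C t by rewrite vee_U1; apply/capv_idPr.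
    rewrite /F !inE xt hx /= eq_sym.
    by rewrite negb_or andbA [(~~ _ && _)]andbC.
  by apply/esym/big1 => y _; rewrite /F; case: (x \notin t) hx => //=; case: (vee C t <= C x)%VS; rewrite ?andbF.
have anti : forall x y, F x y = - F y x.
  move=> x y; rewrite /F.
  have E : [&& x \notin t, y \notin t, x != y, (vee C t <= C x)%VS & (vee C t <= C y)%VS]
     = [&& y \notin t, x \notin t, y != x, (vee C t <= C y)%VS & (vee C t <= C x)%VS].
    by rewrite eq_sym; case: (x \notin t); case: (y \notin t); case: (y != x);
       case: (vee C t <= C x)%VS; case: (vee C t <= C y)%VS.
  rewrite -E; case: ifP => [/and5P [xt yt yx hx hy] | _]; last by rewrite oppr0.
  rewrite eq_sym in yx.
    have yxt : y \notin x |: t by rewrite !inE negb_or yx.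
    have xyt : x \notin y |: t by rewrite !inE negb_or eq_sym yx.
    rewrite setUCA (sgU1_self xt) (sgU1_self xyt) (@sgU1 x _ y xyt) (@sgU1 y _ x yt) (sgU1_self yt).
    rewrite (@sign_flip (x <= y)%N (y <= x)%N); first by ring.
    by apply: leq_flip; rewrite eq_sym.
set S := \sum_x _.
have : S = - S.
  rewrite {2}/S exchange_big /= -sumrN; apply: eq_bigr => x _.
  rewrite -sumrN; apply: eq_bigr => y _; exact: anti.
move/eqP; rewrite -subr_eq0 opprK -mulr2n mulrn_eq0 /=.
by move/eqP.
Qed.

Lemma dD_sub (f g : cochain n) : dD C (f - g) = dD C f - dD C g.
Proof.
apply/ffunP => t; rewrite !ffunE -sumrB; apply: eq_bigr => s _.
by rewrite !ffunE mulrBl.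
Qed.

Lemma dD_dD0 (f : cochain n) : dD C (dD C f) = 0.
Proof. by apply/ffunP => t; rewrite dD_dD ffunE. Qed.

Lemma sg_sq t x : sg t x * sg t x = 1.
Proof. by rewrite /sg -exprD addnn -mul2n mulnC exprM sqrr_sign. Qed.

Lemma homog_sub k (f g : cochain n) : homog C k f -> homog C k g -> homog C k (f - g).
Proof.
move=> hf hg s; rewrite !ffunE => h.
case: (eqVneq (f s) 0) => [e|]; last exact: hf.
by apply: hg; move: h; rewrite e sub0r oppr_eq0.
Qed.

Lemma homog_dD k (f : cochain n) : homog C k f -> homog C (k + 1) (dD C f).
Proof.
move=> hf s; rewrite dDE.
case: (pickP (fun x => [&& x \notin s, (vee C s <= C x)%VS & f (x |: s) != 0])).
  move=> x /and3P [xs hx nz] _.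
  have := hf _ nz; rewrite /degD /codimW.
  have -> : vee C (x |: s) = vee C s by rewrite vee_U1; apply/capv_idPr.
  rewrite cardsU1 xs /= => <-; lia.
move=> none; rewrite big1 ?eqxx // => x /andP [xs hx].
by have := none x; rewrite xs hx /= => /negbFE/eqP ->; rewrite mulr0.
Qed.

Section Homot.
Variables (u v : 'I_n) (huv : u != v) (hsub : (C u <= C v)%VS).

Definition Hop (f : cochain n) : cochain n :=
  [ffun t : {set 'I_n} => if (u \in t) && (v \in t) then sg t v * f (t :\ v) else 0].

Lemma vee_le_v (t : {set 'I_n}) : u \in t -> (vee C t <= C v)%VS.
Proof. by move=> ut; apply: subv_trans hsub; apply: vee_le. Qed.

Lemma homog_Hop k (f : cochain n) : homog C k f -> homog C (k - 1) (Hop f).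
Proof.
move=> hf s; rewrite ffunE; case: ifP => [/andP [us vs]|]; last by rewrite eqxx.
rewrite mulf_eq0 negb_or => /andP [_ nz].
have := hf _ nz; rewrite /degD /codimW.
have us' : u \in s :\ v by rewrite !inE us huv.
have e1 : vee C s = vee C (s :\ v).
  by rewrite -{1}(setD1K vs) vee_U1; apply/capv_idPr/vee_le_v.
have e2 : #|s| = #|s :\ v|.+1 by rewrite -{1}(setD1K vs) cardsU1 !inE eqxx.
by rewrite e1 e2 => <-; rewrite -[#|s :\ v|.+1]addn1 PoszD opprD addrA.
Qed.

Lemma homot (f : cochain n) (t : {set 'I_n}) : u \in t -> f t = dD C (Hop f) t + Hop (dD C f) t.
Proof.
move=> ut; case: (boolP (v \in t)) => vt.
  rewrite [Hop _ t]ffunE ut vt /=.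
  have [t' vt' et] : exists2 t' : {set 'I_n}, v \notin t' & t = v |: t'.
    by exists (t :\ v); rewrite ?setD1K // !inE eqxx.
  rewrite et; subst t.
  have ut' : u \in t' by move: ut; rewrite in_setU1 (negbTE huv).
  rewrite setU1K // [dD C f t']dDE (bigD1 v) /=; last by rewrite vt' vee_le_v.
  rewrite mulrDr mulrA sg_sq mul1r addrCA -[LHS]addr0; congr (_ + _).
  have ev : vee C (v |: t') = vee C t' by rewrite vee_U1; apply/capv_idPr/vee_le_v.
  rewrite dDE ev.
  have pe : forall x, (x \notin v |: t') && (vee C t' <= C x)%VS =
     (x \notin t') && (vee C t' <= C x)%VS && (x != v).
    move=> x; rewrite in_setU1 negb_or.
    by case: (x == v); case: (x \in t'); case: (vee C t' <= C x)%VS.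
  rewrite (eq_bigl _ _ pe).
  rewrite big_distrr -big_split big1 //= => x /andP [/andP [xt hx] xv'].
  have vxt : v \notin x |: t' by rewrite !inE negb_or vt' eq_sym xv'.
  rewrite ffunE !inE eqxx orbT ut' !orbT /= setUCA setU1K //.
  rewrite (sgU1 _ vxt) (sgU1_self vxt) (@sgU1 x t' v xt) (sgU1_self vt').
  have := leq_flip xv'; case: (x <= v)%N; case: (v <= x)%N => //= _;
    rewrite ?expr0 ?expr1; ring.
rewrite [Hop _ t]ffunE ut (negbTE vt) /= addr0 dDE (bigD1 v) /=; last by rewrite vt vee_le_v.
rewrite ffunE !inE eqxx ut orbT /= setU1K // mulrA sg_sq mul1r big1 ?addr0 //.
move=> x /andP [_ xv]; rewrite ffunE [v \in _]in_setU1 (negbTE vt) eq_sym (negbTE xv) /= andbF.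
by rewrite mulr0.
Qed.
End Homot.
End Aux.

Lemma oppfE n (g : cochain n) t : (- g) t = - g t.
Proof. by rewrite ffunE. Qed.
Lemma subfE n (g h : cochain n) t : (g - h) t = g t - h t.
Proof. by rewrite ffunE [(- h) t]ffunE. Qed.

Unset Implicit Arguments.
Set Strict Implicit.
Theorem proposition2p1 (R : realType) (W : vectType R[i]) (n : nat)
    (B : 'I_n -> {vspace W}) (B_inj : injective B)
    (u v : 'I_n) (huv : u != v) (hsub : (B u <= B v)%VS) :
  incl_quasi_iso B u.
Proof.
move=> k; split.
  move=> z hz dz.
  exists (z - dD B (Hop u v z)), (Hop u v z); split.
  - apply: homog_sub => //; have := homog_dD (homog_Hop huv hsub hz).
    by rewrite subrK.
  - move=> t ut; rewrite subfE (homot huv hsub z ut) dz.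
    have -> : Hop u v 0 t = 0 by rewrite !ffunE; case: ifP; rewrite ?mulr0.
    by rewrite addr0 subrr.
  - by rewrite dD_sub dD_dD0 dz subrr.
  - exact: homog_Hop.
  - by rewrite subrK.
move=> z hz az dz [y [hy ey]].
exists (y - dD B (Hop u v y)); split.
- apply: homog_sub => //; have := homog_dD (homog_Hop huv hsub hy).
  by rewrite subrK.
- move=> t ut; rewrite subfE (homot huv hsub y ut) -ey.
  have -> : Hop u v z t = 0.
    rewrite ffunE; case: ifP => // /andP [_ vt]; rewrite az ?mulr0 //.
    by rewrite !inE ut huv.
  by rewrite addr0 subrr.
- by rewrite dD_sub dD_dD0 subr0.
Qed.
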